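(* Let $V$ be a finite nonempty set and $f:\{0,1\}^V\to\{0,1\}^V$. If $f$ has no even-self-dual and no odd-self-dual subnetwork, then $f$ has a unique fixed point $x$, and for every $y\in\{0,1\}^V$ the asynchronous state graph $\Gamma(f)$ contains a directed path from $y$ to $x$ of length $d(x,y)$.
   Context: For $x,y\in\{0,1\}^V$, $x\oplus y$ is componentwise addition mod 2, $1$ is the all-ones point, $e_i$ is the point whose only $1$ is at component $i$, $\|x\|$ is the number of $1$s of $x$, and $d(x,y)=\|x\oplus y\|$ is the Hamming distance; $x$ is even (odd) if $\|x\|$ is even (odd). The conjugate of a network $g$ on $W$ is $\tilde g(x)=g(x)\oplus x$. For nonempty $I\subseteq V$ and $z\in\{0,1\}^{V\setminus I}$, the subnetwork of $f$ induced by $z$ is $h:\{0,1\}^I\to\{0,1\}^I$ with $h(x|_I)=f(x)|_I$ for all $x$ whose restriction to $V\setminus I$ is $z$ ($f$ is a subnetwork of itself). A network $g$ on $W$ is self-dual if $g(x\oplus 1)=g(x)\oplus 1$ for all $x$; even (odd) if $\tilde g(\{0,1\}^W)$ is exactly the set of even (odd) points; even-self-dual (odd-self-dual) if both even (odd) and self-dual. The asynchronous state graph $\Gamma(f)$ is the digraph on vertex set $\{0,1\}^V$ with an arc $x\to x\oplus e_i$ for every $x$ and $i\in V$ such that $f_i(x)\neq x_i$. *)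

(* Defs.v *)
From mathcomp Require Import all_boot.
Set Implicit Arguments. Unset Strict Implicit. Unset Printing Implicit Defensive.

Section Networks.
Variable W : finType.
Notation point := {ffun W -> bool}.

Definition xorp (x y : point) : point := [ffun i => x i (+) y i].
Definition ones : point := [ffun _ => true].
Definition unit_pt (i : W) : point := [ffun j => j == i].
Definition weight (x : point) : nat := #|[set i | x i]|.
Definition hdist (x y : point) : nat := weight (xorp x y).
Definition even_pt (x : point) : bool := ~~ odd (weight x).
Definition odd_pt (x : point) : bool := odd (weight x).

Definition conjn (g : point -> point) (x : point) : point := xorp (g x) x.
Definition self_dual (g : point -> point) : Prop :=
  forall x, g (xorp x ones) = xorp (g x) ones.
Definition even_net (g : point -> point) : Prop :=
  forall y, (exists x, conjn g x = y) <-> even_pt y.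
Definition odd_net (g : point -> point) : Prop :=
  forall y, (exists x, conjn g x = y) <-> odd_pt y.
Definition even_self_dual (g : point -> point) : Prop := even_net g /\ self_dual g.
Definition odd_self_dual (g : point -> point) : Prop := odd_net g /\ self_dual g.

Definition async_arc (f : point -> point) : rel point :=
  fun x y => [exists i, (f x i != x i) && (y == xorp x (unit_pt i))].
End Networks.

Section Subnetworks.
Variable V : finType.
Definition subT (I : {set V}) : finType := {v : V | v \in I}.

Definition glue (I : {set V}) (y : {ffun subT I -> bool}) (w : {ffun V -> bool})
  : {ffun V -> bool} :=
  [ffun v => if insub v is Some u then y u else w v].

(* subnetwork of f induced by the restriction of w to V \ I *)
Definition subnet (f : {ffun V -> bool} -> {ffun V -> bool}) (I : {set V})
  (w : {ffun V -> bool}) : {ffun subT I -> bool} -> {ffun subT I -> bool} :=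
  fun y => [ffun u : subT I => f (glue y w) (val u)].
End Subnetworks.
Arguments glue {V} I y w.
Arguments subnet {V} f I w _.

(* Main.v *)
Require Import Defs.
From mathcomp Require Import all_boot zify.
Set Implicit Arguments. Unset Strict Implicit. Unset Printing Implicit Defensive.

Section Proof.
Variable V : finType.
Variable f : {ffun V -> bool} -> {ffun V -> bool}.
Notation point := {ffun V -> bool}.

Definition cb (y : point) (v : V) : bool := f y v (+) y v.
Definition inC (S : {set V}) (w y : point) : bool :=
  [forall v, (v \notin S) ==> (y v == w v)].
Definition Cset S w (T : {set V}) :=
  [set y : point | inC S w y && [forall (v | v \in S), cb y v == (v \in T)]].
Definition N S w T := #|Cset S w T|.
Definition upd (w : point) (j : V) (b : bool) : point :=
  [ffun v => if v == j then b else w v].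

Lemma inCP (S : {set V}) (w y : point) : reflect (forall v, v \notin S -> y v = w v) (inC S w y).
Proof.
apply: (iffP forallP) => H v.
  by move=> hv; apply/eqP; exact: (implyP (H v)).
by apply/implyP => hv; apply/eqP; exact: H.
Qed.

Lemma CsetP (S T : {set V}) (w y : point) : reflect ((forall v, v \notin S -> y v = w v) /\
   (forall v, v \in S -> cb y v = (v \in T))) (y \in Cset S w T).
Proof.
rewrite inE; apply: (iffP andP) => [[/inCP h1 /forall_inP h2]|[h1 h2]].
  by split=> // v /h2 /eqP.
by split; [apply/inCP | apply/forall_inP => v /h2 ->].
Qed.

Lemma split_count (S T : {set V}) (w : point) j : j \in S -> j \in T ->
  N S w T + N S w (T :\ j) =
  N (S :\ j) (upd w j false) T + N (S :\ j) (upd w j true) T.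
Proof.
move=> jS jT.
pose U := [set y : point | inC S w y &&
   [forall (v | v \in S :\ j), cb y v == (v \in T)]].
have UP (y : point) : reflect ((forall v, v \notin S -> y v = w v) /\
   (forall v, v \in S :\ j -> cb y v = (v \in T))) (y \in U).
  rewrite inE; apply: (iffP andP) => [[/inCP h1 /forall_inP h2]|[h1 h2]].
    by split=> // v /h2 /eqP.
  by split; [apply/inCP | apply/forall_inP => v /h2 ->].
have e1 : Cset S w T = U :&: [set y | cb y j].
  apply/setP => y; rewrite in_setI [y \in [set _ | cb _ _]]inE.
  apply/CsetP/andP => [[h1 h2]|[/UP [h1 h2] h3]].
    split; last by rewrite h2.
    by apply/UP; split=> // v; rewrite in_setD1 => /andP [_ /h2].
  split=> // v vS; case: (eqVneq v j) => [->|vj]; first by rewrite jT.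
  by apply: h2; rewrite in_setD1 vj.
have e2 : Cset S w (T :\ j) = U :\: [set y | cb y j].
  apply/setP => y; rewrite in_setD andbC [y \in [set _ | cb _ _]]inE.
  apply/CsetP/andP => [[h1 h2]|[/UP [h1 h2] h3]].
    split; last by rewrite h2 // !inE eqxx.
    apply/UP; split=> // v; rewrite in_setD1 => /andP [vj vS].
    by rewrite h2 // in_setD1 vj.
  split=> // v vS; case: (eqVneq v j) => [->|vj]; first by rewrite !inE eqxx; apply/negbTE.
  by rewrite in_setD1 vj /=; apply: h2; rewrite in_setD1 vj.
have e3 b : Cset (S :\ j) (upd w j b) T = U :&: [set y : point | y j == b].
  apply/setP => y; rewrite in_setI [y \in [set z : point | z j == b]]inE.
  apply/CsetP/andP => [[h1 h2]|[/UP [h1 h2] /eqP h3]].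
    split; last first.
      by rewrite h1 ?ffunE ?eqxx // !inE eqxx.
    apply/UP; split=> // v vS; rewrite h1 ?ffunE.
      by case: eqP => // vj; rewrite vj jS in vS.
    by rewrite !inE negb_and vS orbT.
  split=> // v; rewrite !inE negb_and negbK => /orP [/eqP ->|vS].
    by rewrite ffunE eqxx.
  by rewrite ffunE h1 //; case: eqP => // vj; rewrite vj jS in vS.
rewrite /N e1 e2 !e3 cardsID.
have -> : [set y : point | y j == false] = ~: [set y : point | y j == true].
  by apply/setP => y; rewrite !inE; case: (y j).
rewrite -setDE addnC.
have -> : [set y : point | y j == true] = [set y : point | y j].
  by apply/setP => y; rewrite !inE; case: (y j).
by rewrite cardsID.
Qed.

Lemma N_ext (S T T' : {set V}) w : T :&: S = T' :&: S -> N S w T = N S w T'.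
Proof.
move=> e; rewrite /N; apply: eq_card => y.
apply/CsetP/CsetP => -[h1 h2]; split=> // v vS; rewrite h2 //.
  by have := congr1 (fun A : {set V} => v \in A) e; rewrite /= !inE vS !andbT.
by have := congr1 (fun A : {set V} => v \in A) e; rewrite /= !inE vS !andbT.
Qed.

Lemma card_dec (S T : {set V}) j : j \in T :&: S ->
  #|(T :\ j) :&: S| < #|T :&: S| /\ #|T :&: (S :\ j)| < #|T :&: S|.
Proof.
move=> jTS; rewrite (cardsD1 j (T :&: S)) jTS.
have -> : (T :\ j) :&: S = (T :&: S) :\ j.
  by apply/setP => v; rewrite !inE; case: (v == j); rewrite ?andbF.
have -> : T :&: (S :\ j) = (T :&: S) :\ j.
  by apply/setP => v; rewrite !inE; case: (v == j); rewrite ?andbF ?andbT //= andbC.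
by split.
Qed.

Lemma count_good k : (forall (S : {set V}) w, #|S| < k -> N S w set0 = 1) ->
  forall n (S T : {set V}) w, #|T :&: S| <= n -> #|S| < k -> N S w T = 1.
Proof.
move=> Hk; elim=> [|n IH] S T w hn hS.
  rewrite (@N_ext _ _ set0) ?Hk //.
  by move: hn; rewrite leqn0 cards_eq0 set0I => /eqP.
case: (set_0Vmem (T :&: S)) => [e|[j jTS]].
  by rewrite (@N_ext _ _ set0) ?Hk // set0I.
have [d1 d2] := card_dec jTS.
move: (jTS); rewrite inE => /andP [jT jS].
have := split_count w jS jT.
rewrite (IH S (T :\ j)) ?(IH (S :\ j) T) //; try lia.
- by apply: leq_ltn_trans hS; rewrite (cardsD1 j S) jS.
- by apply: leq_ltn_trans hS; rewrite (cardsD1 j S) jS.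
Qed.

Lemma count_top (S : {set V}) w :
  (forall (S' : {set V}) w', #|S'| < #|S| -> N S' w' set0 = 1) ->
  forall n (T : {set V}), #|T :&: S| <= n ->
  (odd #|T :&: S| -> N S w T + N S w set0 = 2) /\
  (~~ odd #|T :&: S| -> N S w T = N S w set0).
Proof.
move=> Hk; elim=> [|n IH] T hn.
  have e : T :&: S = set0 by move: hn; rewrite leqn0 cards_eq0 => /eqP.
  by rewrite e cards0 (@N_ext _ _ set0) // set0I.
case: (set_0Vmem (T :&: S)) => [e|[j jTS]].
  by rewrite e cards0 (@N_ext _ _ set0) // set0I.
have [d1 d2] := card_dec jTS.
move: (jTS); rewrite inE => /andP [jT jS].
have hS : #|S :\ j| < #|S| by rewrite (cardsD1 j S) jS.
have := split_count w jS jT.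
have G (S' T' : {set V}) w' : #|S'| < #|S| -> N S' w' T' = 1.
  by move=> h; exact: (@count_good #|S| Hk _ S' T' w' (leqnn _) h).
rewrite (G (S :\ j)) // (G (S :\ j)) //.
have [i1 i2] := IH (T :\ j) ltac:(lia).
have : #|T :&: S| = (#|(T :\ j) :&: S|).+1.
  rewrite (cardsD1 j (T :&: S)) jTS.
  congr (_.+1); apply: eq_card => v.
  by rewrite !inE; case: (v == j); rewrite ?andbF.
move=> ->; rewrite /=.
case: (odd _) i1 i2 => /= i1 i2; split=> // _.
- by have := i1 isT; lia.
- by have := i2 isT; lia.
Qed.

Definition flipS (S : {set V}) (y : point) : point :=
  [ffun v => if v \in S then ~~ y v else y v].

Lemma N_card1 (A : {set point}) y z : #|A| = 1 -> y \in A -> z \in A -> y = z.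
Proof.
move/eqP/cards1P => [a ->]; rewrite !inE => /eqP -> /eqP -> //.
Qed.

Lemma flip_cb (S : {set V}) w :
  (forall (S' : {set V}) w', #|S'| < #|S| -> N S' w' set0 = 1) ->
  (N S w set0 = 0 \/ N S w set0 = 2) ->
  forall y, inC S w y -> forall v, v \in S -> cb (flipS S y) v = cb y v.
Proof.
move=> Hk hm y /inCP yC.
pose T := [set v | cb y v].
have yT : y \in Cset S w T by apply/CsetP; split=> // v _; rewrite inE.
have N2 : N S w T = 2.
  have [i1 i2] := @count_top S w Hk _ T (leqnn _).
  have : 0 < N S w T by rewrite /N card_gt0; apply/set0Pn; exists y.
  by case: (odd _) i1 i2 => i1 i2; [have := i1 isT | have := i2 isT]; lia.
have : 0 < #|Cset S w T :\ y|.
  by move: N2; rewrite /N (cardsD1 y) yT; lia.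
rewrite card_gt0 => /set0Pn [z]; rewrite in_setD1 => /andP [zy zT].
have [zC zc] := CsetP _ _ _ _ zT.
have ez : z = flipS S y.
  pose D := [set v | y v != z v].
  have DS : D \subset S.
    apply/subsetP => v; rewrite inE; apply: contraR => vS.
    by rewrite yC // zC.
  case: (eqVneq D S) => [DeS|DnS].
    apply/ffunP => v; rewrite ffunE; case vS: (v \in S).
      by move: vS; rewrite -DeS inE; case: (y v); case: (z v).
    by rewrite yC ?vS // zC ?vS.
  have hD : #|D| < #|S| by apply: proper_card; rewrite properEneq DnS DS.
  have N1 : N D y T = 1 by exact: (@count_good #|S| Hk _ D T y (leqnn _) hD).
  have : y = z.
    apply: (N_card1 N1).
      by apply/CsetP; split=> // v vD; rewrite inE.
    apply/CsetP; split.
      by move=> v; rewrite inE negbK => /eqP.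
    by move=> v vD; rewrite zc ?(subsetP DS).
  by move=> e; rewrite e eqxx in zy.
by move=> v vS; rewrite -ez zc // inE.
Qed.

Lemma glue_val (S : {set V}) (x : {ffun subT S -> bool}) w (u : subT S) :
  glue S x w (val u) = x u.
Proof. by rewrite /glue ffunE valK. Qed.

Lemma glue_out (S : {set V}) (x : {ffun subT S -> bool}) w v :
  v \notin S -> glue S x w v = w v.
Proof. by move=> vS; rewrite /glue ffunE insubF //; apply/negbTE. Qed.

Definition restr (S : {set V}) (y : point) : {ffun subT S -> bool} :=
  [ffun u => y (val u)].

Lemma glue_restr (S : {set V}) w y : inC S w y -> glue S (restr S y) w = y.
Proof.
move=> /inCP yC; apply/ffunP => v; rewrite /glue ffunE.
case: insubP => [u _ <-|vS]; first by rewrite ffunE.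
by rewrite yC.
Qed.

Lemma conj_sub (S : {set V}) w (x : {ffun subT S -> bool}) :
  conjn (subnet f S w) x = [ffun u => cb (glue S x w) (val u)].
Proof.
by apply/ffunP => u; rewrite /conjn /xorp /subnet !ffunE /cb glue_val.
Qed.

Definition Te (S : {set V}) (e : {ffun subT S -> bool}) : {set V} :=
  [set val u | u in [set u | e u]].

Lemma Te_mem (S : {set V}) (e : {ffun subT S -> bool}) u : (val u \in Te e) = e u.
Proof. by rewrite /Te mem_imset ?inE //; exact: val_inj. Qed.

Lemma Te_card (S : {set V}) (e : {ffun subT S -> bool}) : #|Te e :&: S| = weight e.
Proof.
have -> : Te e :&: S = Te e.
  apply/setIidPl/subsetP => v /imsetP [u _ ->]; exact: (valP u).
by rewrite /Te card_imset //; exact: val_inj.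
Qed.

Lemma image_N (S : {set V}) w (e : {ffun subT S -> bool}) :
  (exists x, conjn (subnet f S w) x = e) <-> 0 < N S w (Te e).
Proof.
split.
  move=> [x ex]; rewrite /N card_gt0; apply/set0Pn; exists (glue S x w).
  apply/CsetP; split; first by move=> v; exact: glue_out.
  move=> v vS; have [u <-] : exists u : subT S, val u = v by exists (exist _ v vS).
  by rewrite Te_mem -ex conj_sub ffunE.
rewrite /N card_gt0 => /set0Pn [y /CsetP [yC yc]].
have yC' : inC S w y by apply/inCP.
exists (restr S y); apply/ffunP => u.
by rewrite conj_sub ffunE glue_restr // yc ?Te_mem // (valP u).
Qed.


Lemma glue_inC (S : {set V}) (x : {ffun subT S -> bool}) w : inC S w (glue S x w).
Proof. by apply/inCP => v; exact: glue_out. Qed.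

Lemma sd_sub (S : {set V}) w :
  (forall (S' : {set V}) w', #|S'| < #|S| -> N S' w' set0 = 1) ->
  (N S w set0 = 0 \/ N S w set0 = 2) -> self_dual (subnet f S w).
Proof.
move=> Hk hm x; apply/ffunP => u; rewrite /subnet /xorp !ffunE.
have eg : glue S [ffun i => x i (+) ones (subT S) i] w = flipS S (glue S x w).
  apply/ffunP => v; rewrite /flipS ffunE.
  case vS: (v \in S).
    have -> : v = val (exist _ v vS : subT S) by [].
    by rewrite !glue_val ffunE /ones ffunE addbT.
  by rewrite !glue_out ?vS.
have := flip_cb Hk hm (glue_inC x w) (valP u).
rewrite eg /cb /flipS ffunE (valP u) /ones ffunE.
by case: (f _ _); case: (f _ _); case: (match _ with Some _ => _ | None => _ end).
Qed.

Lemma all_good :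
  (forall (I : {set V}) (w : point), I != set0 ->
      ~ even_self_dual (subnet f I w) /\ ~ odd_self_dual (subnet f I w)) ->
  forall k (S : {set V}) w, #|S| < k -> N S w set0 = 1.
Proof.
move=> Hnet; elim=> [//|k IH] S w hS.
have Hk : forall (S' : {set V}) w', #|S'| < #|S| -> N S' w' set0 = 1.
  by move=> S' w' h; apply: IH; lia.
case: (set_0Vmem S) => [S0|[j jS]].
  rewrite /N (_ : Cset S w set0 = [set w]) ?cards1 //.
  apply/setP => y; rewrite inE; apply/CsetP/eqP => [[h1 _]|->].
    by apply/ffunP => v; apply: h1; rewrite S0 inE.
  by split=> // v; rewrite S0 inE.
have Sn0 : S != set0 by apply/set0Pn; exists j.
case: (eqVneq (N S w set0) 1) => // hm1.
have hm : N S w set0 = 0 \/ N S w set0 = 2.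
  have [i1 _] := @count_top S w Hk _ [set j] (leqnn _).
  have : odd #|[set j] :&: S|.
    by rewrite (_ : [set j] :&: S = [set j]) ?cards1 //; apply/setIidPl; rewrite sub1set.
  move/i1; move: hm1; lia.
have [ne no] := Hnet S w Sn0.
have sd := sd_sub Hk hm.
have par (e : {ffun subT S -> bool}) : 0 < N S w (Te e) <->
   (if odd (weight e) then N S w set0 = 0 else N S w set0 = 2).
  have [i1 i2] := @count_top S w Hk _ (Te e) (leqnn _).
  rewrite Te_card in i1 i2.
  case: (odd _) i1 i2 => i1 i2; [have := i1 isT | have := i2 isT]; lia.
case: hm => hm.
  exfalso; apply: no; split=> // e; rewrite image_N par /odd_pt hm.
  by case: (odd _).
exfalso; apply: ne; split=> // e; rewrite image_N par /even_pt hm.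
by case: (odd _).
Qed.

End Proof.

Theorem corollary4 (V : finType) (f : {ffun V -> bool} -> {ffun V -> bool}) :
  0 < #|V| ->
  (forall (I : {set V}) (w : {ffun V -> bool}), I != set0 ->
      ~ even_self_dual (subnet f I w) /\ ~ odd_self_dual (subnet f I w)) ->
  exists x : {ffun V -> bool},
    [/\ f x = x,
        (forall x' : {ffun V -> bool}, f x' = x' -> x' = x) &
        (forall y : {ffun V -> bool}, exists p : seq {ffun V -> bool},
           [/\ size p = hdist x y, path (async_arc f) y p & last y p = x])].
Proof.
move=> _ Hnet.
have G S w : N f S w set0 = 1 by apply: (all_good Hnet (k := #|S|.+1)).
have fixP (S : {set V}) (w y : {ffun V -> bool}) : reflect ((forall v, v \notin S -> y v = w v) /\
    (forall v, v \in S -> f y v = y v)) (y \in Cset f S w set0).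
  apply: (iffP (CsetP _ _ _ _ _)) => -[h1 h2]; split=> // v vS; have := h2 v vS;
    rewrite /cb inE; by case: (f y v); case: (y v).
have := G setT [ffun=> false]; move/eqP/cards1P => [x ex].
have xC : x \in Cset f setT [ffun=> false] set0 by rewrite ex inE.
have [_ fx] := fixP _ _ _ xC.
have fxx : f x = x by apply/ffunP => v; apply: fx; rewrite inE.
exists x; split=> //.
  move=> x' fx'.
  have : x' \in Cset f setT [ffun=> false] set0.
    by apply/fixP; split=> [v|v _]; rewrite ?inE // fx'.
  by rewrite ex inE => /eqP.
have step y : y != x -> exists i, (f y i != y i) && (x i != y i).
  move=> yx; apply/existsP; apply: contraR yx => /existsPn hn.
  pose D := [set v | x v != y v].
  apply/eqP; apply: (N_card1 (G D x)); apply/fixP; split.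
  - by move=> v; rewrite inE negbK => /eqP.
  - by move=> v vD; have := hn v; rewrite inE in vD; rewrite vD andbT negbK => /eqP.
  - by [].
  - by move=> v _; rewrite fxx.
suff H n : forall y, hdist x y = n -> exists p : seq {ffun V -> bool},
  [/\ size p = hdist x y, path (async_arc f) y p & last y p = x].
  by move=> y; exact: (H _ y erefl).
elim: n => [|n IH] y hd.
  exists [::]; split=> //=; apply/ffunP => v.
  move: hd; rewrite /hdist /weight => /cards0_eq /setP /(_ v).
  by rewrite !inE ffunE; case: (x v); case: (y v).
have yx : y != x.
  apply/eqP => yx; move: hd; rewrite yx /hdist /weight.
  rewrite (_ : [set i | xorp x x i] = set0) ?cards0 //.
  by apply/setP => v; rewrite !inE ffunE addbb.
have [i /andP [fi xi]] := step y yx.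
pose y' := xorp y (unit_pt i).
have hd' : hdist x y' = n.
  have xi' : x i (+) y i = true by move: xi; case: (x i); case: (y i).
  move: hd; rewrite /hdist /weight (cardsD1 i) inE ffunE xi' add1n => -[<-].
  apply: eq_card => v; rewrite !inE !ffunE.
  case: (eqVneq v i) => [->|vi] /=; last by rewrite addbF.
  by move: xi; case: (x i); case: (y i).
have [p [sp pp lp]] := IH y' hd'.
exists (y' :: p); split=> //=.
- by rewrite sp hd' hd.
- rewrite pp andbT; apply/existsP; exists i; rewrite fi eqxx //.
Qed.
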